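(* Let $\mathcal{G}=(G,\lambda)$ be a simple temporal clique, $G=(V,E)$, and let $\mathcal{T}^+=(V,E^+_T)$ be obtained by the backward construction. Then the backward fireworks cover $S^+_T=\{\{u,v\}\in E:(u,v)\in E^+_T\}\cup\{\{u,v\}\in E: u \text{ is a collector}\}$ is a temporal spanner of $\mathcal{G}$.
   Context: A simple temporal clique is a pair $\mathcal{G}=(G,\lambda)$ where $G=(V,E)$ is the complete graph on a finite vertex set $V$ and $\lambda:E\to\mathbb{N}$ assigns to each edge a single integer label such that any two distinct edges sharing an endpoint have different labels; the label of an arc $(x,y)$ is $\lambda(\{x,y\})$. A journey from $x$ to $y$ is a sequence of vertices $x=u_0,\dots,u_k=y$ ($k\ge1$) with $\lambda(\{u_{i-1},u_i\})<\lambda(\{u_i,u_{i+1}\})$ for $1\le i<k$. A set $E'\subseteq E$ is a temporal spanner of $\mathcal{G}$ if for every ordered pair of distinct vertices $x,y$ there is a journey from $x$ to $y$ using only edges of $E'$. For a vertex $v$, $e^+(v)$ is the edge incident to $v$ with largest label. Backward construction: let $E^+$ be the set of arcs $(v,u)$ with $\{u,v\}=e^+(v)$, except that if $e^+(u)=e^+(v)=\{u,v\}$ only one of the two arcs $(u,v),(v,u)$ is included (arbitrarily). Initialize $E^+_T:=E^+$. For every vertex $v$ of in-degree at least $2$ in $(V,E^+)$, let $(u_1,v),\dots,(u_\ell,v)$ be its in-arcs in $E^+$, where $(u_\ell,v)$ has the smallest label; for each $i<\ell$, if $u_i$ has in-degree $0$ in $(V,E^+)$, replace $(u_i,v)$ by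 $(v,u_i)$ in $E^+_T$, and otherwise remove $(u_i,v)$ from $E^+_T$. Set $\mathcal{T}^+=(V,E^+_T)$. A collector is a vertex of in-degree $0$ in $\mathcal{T}^+$. *)

(* Defs.v *)
From mathcomp Require Import all_boot.
Set Implicit Arguments. Unset Strict Implicit. Unset Printing Implicit Defensive.

(* A temporal clique on the finite vertex type V: every pair of distinct
   vertices {x,y} is an edge, with label lam x y (lam must be symmetric). *)
Section TemporalClique.
Variables (V : finType) (lam : V -> V -> nat).

Definition simple_temporal_clique : Prop :=
  (forall x y, lam x y = lam y x) /\
  (forall x y z, x != y -> x != z -> y != z -> lam x y != lam x z).

(* top v u : {v,u} is e^+(v), the edge at v with largest label *)
Definition top (v u : V) : bool :=
  (u != v) && [forall w, (w != v) ==> (lam v w <= lam v u)].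

(* E^+ : arcs (v,u) with {u,v} = e^+(v); when e^+(u) = e^+(v) = {u,v}
   the arbitrary orientation is chosen by [pick] (pick x y = arc (x,y) kept) *)
Definition Eplus (pick : V -> V -> bool) (v u : V) : bool :=
  top v u && (~~ top u v || pick v u).

Definition indeg (A : rel V) (v : V) : nat := #|[set u | A u v]|.

Definition min_in (A : rel V) (u v : V) : bool :=
  A u v && [forall w, A w v ==> (lam u v <= lam w v)].

Definition ETplus (pick : V -> V -> bool) (x y : V) : bool :=
  let A := Eplus pick in
  (A x y && ((indeg A y < 2) || min_in A x y))
  || [&& A y x, 2 <= indeg A x, ~~ min_in A y x & indeg A y == 0].

Definition collector (pick : V -> V -> bool) (v : V) : bool :=
  [forall x, ~~ ETplus pick x v].

(* the backward fireworks cover S^+_T, as a symmetric relation on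
   distinct vertices (an edge {u,v}) *)
Definition Splus (pick : V -> V -> bool) (u v : V) : bool :=
  (u != v) &&
  [|| ETplus pick u v, ETplus pick v u, collector pick u | collector pick v].

(* journey from x to y using only edges in S: x = u_0, s = [u_1;...;u_k],
   k >= 1, consecutive vertices distinct and forming edges in S, labels
   strictly increasing *)
Definition journey (S : rel V) (x y : V) (s : seq V) : Prop :=
  [/\ 0 < size s, last x s = y,
      path (fun a b => (a != b) && S a b) x s &
      sorted ltn [seq lam p.1 p.2 | p <- zip (x :: s) s]].

Definition temporal_spanner (S : rel V) : Prop :=
  forall x y : V, x != y -> exists s, journey S x y s.

End TemporalClique.

(* Main.v *)
Require Import Defs.
From mathcomp Require Import all_boot.

Definition labs {V : finType} (lam : V -> V -> nat) (x : V) (s : seq V) :=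
  [seq lam p.1 p.2 | p <- zip (x :: s) s].

Lemma labs_rcons {V : finType} (lam : V -> V -> nat) x s q :
  labs lam x (rcons s q) = rcons (labs lam x s) (lam (last x s) q).
Proof. by elim: s x => [|a s IH] x //=; rewrite -IH. Qed.

Lemma sorted_rcons_lt (l : seq nat) v :
  sorted ltn l -> last 0 l < v -> l != [::] -> sorted ltn (rcons l v).
Proof. by case: l => [//|a l] /= h1 h2 _; rewrite rcons_path h1; exact: h2. Qed.

Lemma journey_ext {V : finType} {lam : V -> V -> nat} {S : rel V} {x p q s} :
  journey lam S x p s -> last 0 (labs lam x s) < lam p q -> p != q -> S p q ->
  journey lam S x q (rcons s q) /\ last 0 (labs lam x (rcons s q)) = lam p q.
Proof.
case=> sz hl hp hs hL pq Spq; rewrite labs_rcons hl last_rcons; split=> //.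
split.
- by rewrite size_rcons.
- by rewrite last_rcons.
- by rewrite rcons_path hp hl pq Spq.
- change (sorted ltn (labs lam x (rcons s q))); rewrite labs_rcons hl.
  apply: sorted_rcons_lt => //.
  by case: s sz {hl hp hs hL}.
Qed.

Lemma journey1 {V : finType} (lam : V -> V -> nat) {S : rel V} {x y} :
  x != y -> S x y -> journey lam S x y [:: y] /\ last 0 (labs lam x [:: y]) = lam x y.
Proof. by move=> xy Sxy; split=> //; split=> //=; rewrite xy Sxy. Qed.

Theorem theorem4 (V : finType) (lam : V -> V -> nat)
  (Hclique : simple_temporal_clique lam)
  (pick : V -> V -> bool)
  (Hpick : forall x y : V, x != y -> pick x y != pick y x) :
  temporal_spanner lam (Splus lam pick).
Proof.
case: Hclique => Hsym Hinj.
set A := Eplus lam pick.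
set S := Splus lam pick.
have topuniq : forall v a b, top lam v a -> top lam v b -> a = b.
  move=> v a b /andP[av /forallP ha] /andP[bv /forallP hb].
  apply/eqP; apply/negPn/negP => ab.
  have := Hinj v a b; rewrite eq_sym av eq_sym bv ab => /(_ isT isT isT).
  have := implyP (ha b) bv; have := implyP (hb a) av.
  by move=> h1 h2; rewrite eqn_leq h1 h2.
have toplt : forall v w x, top lam v w -> x != v -> x != w -> lam v x < lam v w.
  move=> v w x /andP[wv /forallP h] xv xw.
  rewrite ltn_neqAle (implyP (h x) xv) andbT.
  by apply: Hinj => //; rewrite eq_sym.
have antis : forall a b, A a b -> A b a -> False.
  move=> a b; rewrite /A /Eplus => /andP[tab h1] /andP[tba h2].
  rewrite tba /= in h1; rewrite tab /= in h2.
  have ab : a != b by case/andP: tba.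
  by have := Hpick a b ab; rewrite h1 h2.
have Atop : forall a b, A a b -> top lam a b by move=> a b /andP[].
set kept := fun v w => A v w && ((indeg A w < 2) || min_in lam A v w).
have keptE : forall v w, kept v w -> ETplus lam pick v w.
  by move=> v w h; rewrite /ETplus -/A; apply/orP; left.
have Sof : forall a b, a != b -> ETplus lam pick a b -> S a b.
  by move=> a b ab h; rewrite /S /Splus ab h.
have Scol : forall a b, a != b -> collector lam pick b -> S a b.
  by move=> a b ab h; rewrite /S /Splus ab h !orbT.
have Q : forall k v w, lam v w < k -> kept v w -> forall x, x != v ->
    exists s, journey lam S x v s /\
      (last 0 (labs lam x s) < lam v w \/ x = w).
  elim=> [//|k IH] v w hk kvw x xv.
  have tvw : top lam v w by apply: Atop; case/andP: kvw.
  case: (boolP (collector lam pick v)) => [col|].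
    have [J L] := journey1 lam xv (Scol x v xv col).
    exists [:: v]; split=> //; rewrite L.
    case: (eqVneq x w) => [->|xw]; [by right|left].
    by rewrite Hsym; apply: toplt; rewrite // eq_sym.
  move=> /forallPn[p]; rewrite negbK /ETplus -/A => /orP[hp|].
  - have kpv : kept p v by [].
    have Apv : A p v by case/andP: hp.
    have tpv := Atop _ _ Apv.
    have pv : p != v by rewrite eq_sym; case/andP: tpv.
    have pw : p != w.
      apply/negP=> /eqP epw; rewrite epw in Apv.
      by apply: (antis v w) => //; case/andP: kvw.
    have lt1 : lam p v < lam v w by rewrite Hsym; apply: toplt.
    case: (eqVneq x p) => [->|xp].
      have [J L] := journey1 lam pv (Sof p v pv (keptE _ _ kpv)).
      by exists [:: v]; split=> //; left; rewrite L.
    have [s [J [L|exv]]] := IH p v (leq_trans lt1 hk) kpv x xp.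
      have [J' L'] := journey_ext J L pv (Sof p v pv (keptE _ _ kpv)).
      by exists (rcons s v); split=> //; left; rewrite L'.
    by rewrite exv eqxx in xv.
  - case/and4P=> Avp h2 nmin _.
    have pw := topuniq _ _ _ (Atop _ _ Avp) tvw; subst p.
    case/andP: kvw => _ /orP[|hm]; last by rewrite hm in nmin.
    by rewrite ltnNge h2.
move=> x y xy.
case: (boolP (collector lam pick y)) => [col|].
  by have [J _] := journey1 lam xy (Scol x y xy col); exists [:: y].
move=> /forallPn[p]; rewrite negbK /ETplus -/A => /orP[hp|].
- have kpy : kept p y by [].
  have Apy : A p y by case/andP: hp.
  have py : p != y by rewrite eq_sym; case/andP: (Atop _ _ Apy).
  case: (eqVneq x p) => [->|xp].
    by have [J _] := journey1 lam py (Sof p y py (keptE _ _ kpy)); exists [:: y].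
  have [s [J [L|exy]]] := Q (lam p y).+1 p y (ltnSn _) kpy x xp.
    by have [J' _] := journey_ext J L py (Sof p y py (keptE _ _ kpy)); exists (rcons s y).
  by rewrite exy eqxx in xy.
- move=> hrev; have /and4P[Ayp h2 nmin _] := hrev.
  have Spy : S p y.
    apply: Sof; last by rewrite /ETplus -/A hrev orbT.
    by case/andP: (Atop _ _ Ayp).
  have py : p != y by case/andP: (Atop _ _ Ayp).
  case: (@arg_minnP _ y (fun u => A u p) (fun u => lam u p) Ayp) => m Amp hmin.
  have minm : min_in lam A m p.
    by rewrite /min_in Amp; apply/forallP=> u; apply/implyP; apply: hmin.
  have kmp : kept m p by rewrite /kept Amp minm orbT.
  have mp : m != p by case/andP: (Atop _ _ Amp); rewrite eq_sym.
  have my : m != y by apply/negP=> /eqP emy; by move: nmin; rewrite -emy minm.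
  have ltmy : lam m p < lam p y.
    rewrite ltn_neqAle (Hsym p y) (hmin y Ayp) andbT (Hsym m p) (Hsym y p).
    by apply: Hinj; rewrite // eq_sym.
  case: (eqVneq x p) => [->|xp].
    by have [J _] := journey1 lam py Spy; exists [:: y].
  have [s [J L]] : exists s, journey lam S x p s /\ last 0 (labs lam x s) < lam p y.
    case: (eqVneq x m) => [->|xm].
      have [J L] := journey1 lam mp (Sof m p mp (keptE _ _ kmp)).
      by exists [:: p]; rewrite L.
    have [s [J [L|exp]]] := Q (lam m p).+1 m p (ltnSn _) kmp x xm; last by rewrite exp eqxx in xp.
    have [J' L'] := journey_ext J L mp (Sof m p mp (keptE _ _ kmp)).
    by exists (rcons s p); rewrite L'.
  by have [J' _] := journey_ext J L py Spy; exists (rcons s y).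
Qed.
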